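(* Let $N\ge 2$ and let $\mathcal{X}\in\mathbb{R}^{I_1\times I_2\times\cdots\times I_N}$ be an $N$th-order real tensor. Then there exist positive integers $R_{t,l}$ for all $1\le t<l\le N$, TN cores $\mathcal{G}_k$ ($k=1,\dots,N$) and diagonal matrices $\mathbf{S}_{t,l}\in\mathbb{R}^{R_{t,l}\times R_{t,l}}$ ($1\le t<l\le N$) such that $\mathcal{X}=\mathrm{STN}(\mathcal{G},\mathbf{S})$ (an SVD-inspired TN decomposition of $\mathcal{X}$, as defined in the context) and $$R_{t,l}\le \min(I_t,I_l)\quad\text{for all } 1\le t<l\le N.$$
   Context: Let $\mathbb{K}_N=\{1,\dots,N\}$ and $\mathbb{TL}_N=\{(t,l): 1\le t<l\le N,\ t,l\in\mathbb{N}\}$. Given positive integers $R_{t,l}$ for $(t,l)\in\mathbb{TL}_N$ (with the convention $R_{l,t}$ is not used; all rank indices are written with the smaller index first), an SVD-inspired TN decomposition (SVDinsTN) of $\mathcal{X}\in\mathbb{R}^{I_1\times\cdots\times I_N}$ consists of $N$th-order tensors (TN cores) $\mathcal{G}_k\in\mathbb{R}^{R_{1,k}\times R_{2,k}\times\cdots\times R_{k-1,k}\times I_k\times R_{k,k+1}\times\cdots\times R_{k,N}}$ for $k\in\mathbb{K}_N$ and diagonal matrices $\mathbf{S}_{t,l}\in\mathbb{R}^{R_{t,l}\times R_{t,l}}$ for $(t,l)\in\mathbb{TL}_N$ such that for every index $(i_1,\dots,i_N)$, $$\mathcal{X}(i_1,\dots,i_N)=\sum_{r_{1,2}=1}^{R_{1,2}}\cdots\sum_{r_{N-1,N}=1}^{R_{N-1,N}}\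 \Big(\prod_{(t,l)\in\mathbb{TL}_N}\mathbf{S}_{t,l}(r_{t,l},r_{t,l})\Big)\ \prod_{k=1}^{N}\mathcal{G}_k(r_{1,k},\dots,r_{k-1,k},i_k,r_{k,k+1},\dots,r_{k,N}),$$ where the sum runs over all indices $r_{t,l}\in\{1,\dots,R_{t,l}\}$, $(t,l)\in\mathbb{TL}_N$. This is written $\mathcal{X}=\mathrm{STN}(\mathcal{G},\mathbf{S})$ with $\mathcal{G}=\{\mathcal{G}_k\}_{k\in\mathbb{K}_N}$, $\mathbf{S}=\{\mathbf{S}_{t,l}\}_{(t,l)\in\mathbb{TL}_N}$. The vector $(R_{1,2},R_{1,3},\dots,R_{1,N},R_{2,3},\dots,R_{N-1,N})$ is called the FCTN rank of the decomposition. *)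

(* Defs.v *)
From mathcomp Require Import all_boot all_order all_algebra.
From mathcomp Require Import reals.
Set Implicit Arguments. Unset Strict Implicit. Unset Printing Implicit Defensive.
Import Order.TTheory GRing.Theory Num.Theory.
Local Open Scope ring_scope.

(* Modes are indexed by 'I_N = {0,...,N-1} (paper: 1..N). *)

Definition pairs (N : nat) := {p : 'I_N * 'I_N | (p.1 < p.2)%N}.

Definition rassign (N : nat) (Rk : 'I_N -> 'I_N -> nat) :=
  {dffun forall p : pairs N, 'I_(Rk (sval p).1 (sval p).2)}.

(* value r_{t,l} of an assignment (only meaningful for t < l; 0 otherwise) *)
Definition rval (N : nat) (Rk : 'I_N -> 'I_N -> nat) (r : rassign Rk)
    (t l : 'I_N) : nat :=
  (if (t < l)%N as b return (t < l)%N = b -> nat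
   then fun h => nat_of_ord (r (exist (fun p : 'I_N * 'I_N => (p.1 < p.2)%N) (t, l) h))
   else fun _ => 0%N) (erefl _).

(* The multi-index fed to core G_k: position j holds r_{j,k} if j < k,
   i_k if j = k, and r_{k,j} if j > k; i.e. exactly
   (r_{1,k},...,r_{k-1,k}, i_k, r_{k,k+1},...,r_{k,N}). *)
Definition core_index (N : nat) (I : 'I_N -> nat) (Rk : 'I_N -> 'I_N -> nat)
    (i : forall k : 'I_N, 'I_(I k)) (r : rassign Rk) (k : 'I_N) : 'I_N -> nat :=
  fun j => if (j < k)%N then rval r j k
           else if j == k then nat_of_ord (i k) else rval r k j.

(* A TN core G_k is an N-th order tensor, given as a function of its
   N (natural-number) indices; only the entries with index at position j
   below R_{j,k} (j<k), I_k (j=k), R_{k,j} (j>k) are ever used. *)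
Definition core (R : Type) (N : nat) := ('I_N -> nat) -> R.

Definition STN (R : pzRingType) (N : nat) (I : 'I_N -> nat)
    (Rk : 'I_N -> 'I_N -> nat) (G : 'I_N -> core R N)
    (S : forall t l : 'I_N, 'M[R]_(Rk t l)) (i : forall k : 'I_N, 'I_(I k)) : R :=
  \sum_(r : rassign Rk)
     (\prod_(p : pairs N) S (sval p).1 (sval p).2 (r p) (r p))
     * \prod_(k < N) G k (core_index i r k).

(* Main.v *)
Require Import Defs.
From mathcomp Require Import all_boot all_order all_algebra.
From mathcomp Require Import reals.
From Stdlib Require Import FunctionalExtensionality.
Import Order.TTheory GRing.Theory Num.Theory.
Local Open Scope ring_scope.
Set Implicit Arguments. Unset Strict Implicit.
Lemma rvalE N Rk (r : rassign Rk) (t l : 'I_N) (h : (t < l)%N) :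
  rval r t l = r (exist (fun p : 'I_N * 'I_N => (p.1 < p.2)%N) (t, l) h).
Proof.
rewrite /rval.
suff: forall b (e : (t < l)%N = b),
  (if b as b0 return (t < l)%N = b0 -> nat
   then fun h => nat_of_ord (r (exist (fun p : 'I_N * 'I_N => (p.1 < p.2)%N) (t, l) h))
   else fun _ => 0%N) e = r (exist (fun p : 'I_N * 'I_N => (p.1 < p.2)%N) (t, l) h).
  by apply.
case=> e; last by rewrite h in e.
by rewrite (bool_irrelevance e h).
Qed.

Lemma ci_self N (I : 'I_N -> nat) Rk (i : forall k : 'I_N, 'I_(I k)) (r : rassign Rk) k :
  core_index i r k k = i k.
Proof. by rewrite /core_index ltnn eqxx. Qed.

Lemma ci_swap N (I : 'I_N -> nat) Rk (i : forall k : 'I_N, 'I_(I k)) (r : rassign Rk) k m :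
  k != m -> core_index i r m k = core_index i r k m.
Proof.
move=> km; rewrite /core_index (negbTE km) eq_sym (negbTE km).
case: ltngtP => // /val_inj e; by rewrite e eqxx in km.
Qed.
Unset Implicit Arguments. Set Strict Implicit.
Theorem theorem1 (R : realType) (N : nat) (I : 'I_N -> nat)
    (X : (forall k : 'I_N, 'I_(I k)) -> R) :
  (2 <= N)%N -> (forall k : 'I_N, (0 < I k)%N) ->
  exists Rk : 'I_N -> 'I_N -> nat,
    (forall t l : 'I_N, (t < l)%N -> (0 < Rk t l)%N /\ (Rk t l <= minn (I t) (I l))%N) /\
    exists (G : 'I_N -> core R N) (S : forall t l : 'I_N, 'M[R]_(Rk t l)),
      (forall t l : 'I_N, (t < l)%N -> is_diag_mx (S t l)) /\
      (forall i : forall k : 'I_N, 'I_(I k), X i = STN G S i).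
Proof.
move=> N2 Ipos.
have [m Hm] : exists m : 'I_N, forall k, (I k <= I m)%N.
  case: N I X Ipos N2 => [|n] I X Ipos N2 //.
  by case: (@arg_maxnP _ (@ord0 n) xpredT I) => // j _ H; exists j => k; apply: H.
pose Rk (t l : 'I_N) : nat := if t == m then I l else if l == m then I t else 1%N.
have Rkpos : forall t l, (0 < Rk t l)%N.
  by move=> t l; rewrite /Rk; case: ifP => _ //; case: ifP.
exists Rk; split.
  move=> t l tl; split => //; rewrite /Rk.
  case: eqP => [->|tm]; first by rewrite leq_min Hm leqnn.
  case: eqP => [->|lm]; first by rewrite leq_min Hm leqnn.
  by rewrite leq_min !Ipos.
pose G (k : 'I_N) : core R N :=
  if k == m then (fun f => X (fun j => insubd (Ordinal (Ipos j)) (f j)))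
  else (fun f => ((f m == f k) : bool)%:R).
exists G, (fun t l => 1%:M); split.
  by move=> t l _; apply: scalar_mx_is_diag.
move=> i.
pose v (p : pairs N) : nat :=
  if (sval p).1 == m then nat_of_ord (i (sval p).2) else if (sval p).2 == m then nat_of_ord (i (sval p).1) else 0%N.
pose r0 : rassign Rk := [ffun p => insubd (Ordinal (Rkpos (sval p).1 (sval p).2)) (v p)].
have r0E : forall p, nat_of_ord (r0 p) = v p.
  move=> [[t l] h]; rewrite ffunE insubdK //= /v /Rk /=.
  case: eqP => [_|tm]; first exact: ltn_ord.
  case: eqP => [_|lm]; first exact: ltn_ord.
  done.
pose P (r : rassign Rk) := [forall k, (k != m) ==> (core_index i r k m == core_index i r k k)].
have keyP : forall r, P r = (r == r0).
  move=> r; apply/idP/eqP.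
    move=> /forallP Pr; apply/ffunP => -[[t l] /= h]; apply: val_inj => /=.
    rewrite (r0E (exist _ (t,l) h)) /v /=.
    case: eqP => [tm|tm].
      have lm : l != m by rewrite -tm; apply/eqP => e; rewrite e ltnn in h.
      have := implyP (Pr l) lm; rewrite ci_self /core_index -tm.
      by rewrite h (rvalE r h) => /eqP ->.
    case: eqP => [lm|lm].
      have tm' : t != m by apply/eqP.
      have := implyP (Pr t) tm'; rewrite ci_self /core_index -lm ltnNge (ltnW h) /=.
      have -> : (l == t) = false by apply/eqP => e; rewrite e ltnn in h.
      by rewrite (rvalE r h) => /eqP ->.
    have : (nat_of_ord (r (exist (fun p : 'I_N * 'I_N => (p.1 < p.2)%N) (t, l) h)) < Rk t l)%N by exact: ltn_ord.
    move: (nat_of_ord _) => x.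
    rewrite /Rk /=; move/eqP: tm => /negbTE ->; move/eqP: lm => /negbTE ->.
    by rewrite ltnS leqn0 => /eqP.
  move=> ->; apply/forallP => k; apply/implyP => km.
  rewrite ci_self /core_index; have -> : (m == k) = false by rewrite eq_sym (negbTE km).
  case: ltngtP => [mk|km'|e]; last by rewrite (val_inj e) eqxx in km.
    by rewrite (rvalE r0 mk) r0E /v /= eqxx.
  by rewrite (rvalE r0 km') r0E /v /= (negbTE km) eqxx.
have termE : forall r : rassign Rk, (\prod_(p : pairs N) (1%:M : 'M[R]_(Rk (sval p).1 (sval p).2)) (r p) (r p))
   * \prod_(k < N) G k (core_index i r k) = (P r)%:R * X i.
  move=> r; rewrite big1 ?mul1r; last by move=> p _; rewrite mxE eqxx.
  rewrite (bigD1 m) //= /G eqxx.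
  case Pr: (P r).
    rewrite big1 ?mulr1 ?mul1r; last first.
      move=> k km; rewrite (negbTE km).
      by move/forallP: Pr => /(_ k); rewrite km /= => ->.
    congr X; apply: functional_extensionality_dep => j.
    apply: val_inj; rewrite insubdK /=.
      case: (eqVneq j m) => [->|jm]; first by rewrite ci_self.
      rewrite ci_swap //; move/forallP: Pr => /(_ j); rewrite jm /= => /eqP ->.
      by rewrite ci_self.
    rewrite unfold_in /=; case: (eqVneq j m) => [->|jm]; first by rewrite ci_self ltn_ord.
    rewrite ci_swap //; move/forallP: Pr => /(_ j); rewrite jm /= => /eqP ->.
    by rewrite ci_self ltn_ord.
  rewrite mul0r.
  move/negbT: Pr; rewrite negb_forall => /existsP [k]; rewrite negb_imply => /andP [km nk].
  by rewrite (bigD1 k) //= (negbTE km) (negbTE nk) mul0r mulr0.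
rewrite /STN (eq_bigr _ (fun r _ => termE r)) (bigD1 r0) //= keyP eqxx mul1r big1 ?addr0 //.
by move=> r /negbTE rr; rewrite keyP rr mul0r.
Qed.
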